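(* Let $G$ be a Lie group of dimension $n$ with Lie algebra $\mathfrak{g}$, let $D$ be a left-invariant completely nonholonomic distribution on $G$ of rank $m$, $2\le m<n$, with a left-invariant inner product $\langle\cdot,\cdot\rangle$ (defining a left-invariant sub-Riemannian metric $d$), and let $D^{\perp}$ be a left-invariant rigging of $D$ such that $[\mathfrak{g},\mathfrak{g}]\subset D^{\perp}(e)$. Then all Solov'ev curvatures (sectional, Ricci and scalar) of $(D,\langle\cdot,\cdot\rangle)$ with respect to the rigging $D^{\perp}$ are equal to zero.
   Context: A rigging of $D$ is a distribution $D^\perp$ with $D\oplus D^\perp=TG$. Solov'ev curvatures: choose a left-invariant Riemannian metric $(\cdot,\cdot)$ on $G$ with $(\cdot,\cdot)|_D=\langle\cdot,\cdot\rangle$ and $(D,D^{\perp})=0$; let $\nabla$ be its Levi-Civita connection and $H,V$ the projections onto $D,D^{\perp}$. Put $\overline{\nabla}_XY=H\nabla_X(HY)+V\nabla_X(VY)$, with torsion $T(X,Y)=\overline{\nabla}_XY-\overline{\nabla}_YX-[X,Y]$ and curvature $\overline{R}(X,Y)=\overline{\nabla}_X\overline{\nabla}_Y-\overline{\nabla}_Y\overline{\nabla}_X-\overline{\nabla}_{[X,Y]}$. The curvature tensor $K$ of $D$ is given for $X,Y,Z,W$ tangent to $D$ by $(K(X,Y)Z,W)=(\overline{R}(X,Y)Z,W)-\tfrac12(T(X,Y),T(Z,W))$. The sectional curvature for non-collinear $u,v\in D(p)$ is $K_{uv}=(K(u,v)v,u)/(\|u\|^2\|v\|^2-(u,v)^2)$;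 the Ricci curvature in direction of a unit $w\in D(p)$ is $\sum_i K_{w e_i}$ over an orthonormal basis $e_i$ of $w^\perp\cap D(p)$, and the scalar curvature is the sum of the Ricci curvatures over an orthonormal basis of $D(p)$. *)

(* Defs.v *)
From mathcomp Require Import all_boot all_order all_algebra.
From mathcomp Require Import reals.
Set Implicit Arguments. Unset Strict Implicit. Unset Printing Implicit Defensive.
Import Order.TTheory GRing.Theory Num.Theory.
Local Open Scope ring_scope.

(* Everything is left-invariant, so we work on the Lie algebra g = T_e G,
   modelled as 'rV[R]_n with Lie bracket [br]. Subspaces of g (D(e), D^perp(e))
   are row spaces of square matrices (mxalgebra). *)
Section SubRiemannianLie.
Variables (R : realType) (n : nat).
Local Notation vec := 'rV[R]_n.

Definition lie_bracket (br : vec -> vec -> vec) : Prop :=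
  [/\ forall a x y z, br (a *: x + y) z = a *: br x z + br y z,
      forall x y, br x y = - br y x &
      forall x y z, br x (br y z) + br y (br z x) + br z (br x y) = 0].

(* D(e) Lie-generates g : the only subalgebra containing D(e) is g itself
   (equivalent to D being completely nonholonomic for left-invariant D). *)
Definition lie_generating (br : vec -> vec -> vec) (D : 'M[R]_n) : Prop :=
  forall W : 'M[R]_n, (D <= W)%MS ->
    (forall x y, (x <= W)%MS -> (y <= W)%MS -> (br x y <= W)%MS) ->
    (W == 1%:M)%MS.

(* left-invariant Riemannian metric given by its Gram matrix S at e *)
Definition ip (S : 'M[R]_n) (x y : vec) : R := (x *m S *m y^T) 0 0.

Definition metric_matrix (S : 'M[R]_n) : Prop :=
  S^T = S /\ forall x : vec, x != 0 -> 0 < ip S x x.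

(* nabla X Y = Levi-Civita derivative nabla_X Y of left-invariant fields:
   torsion free and metric (X (Y,Z) = 0 for left-invariant fields) *)
Definition levi_civita (br : vec -> vec -> vec) (S : 'M[R]_n)
  (nabla : vec -> vec -> vec) : Prop :=
  (forall X Y, nabla X Y - nabla Y X = br X Y) /\
  (forall X Y Z, ip S (nabla X Y) Z + ip S Y (nabla X Z) = 0).

Variables (br : vec -> vec -> vec) (S : 'M[R]_n) (nabla : vec -> vec -> vec)
          (D Vs : 'M[R]_n).

Definition Hp (x : vec) : vec := x *m proj_mx D Vs.
Definition Vp (x : vec) : vec := x *m proj_mx Vs D.

Definition nablab (X Y : vec) : vec :=
  Hp (nabla X (Hp Y)) + Vp (nabla X (Vp Y)).

Definition torsion (X Y : vec) : vec := nablab X Y - nablab Y X - br X Y.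

Definition Rbar (X Y Z : vec) : vec :=
  nablab X (nablab Y Z) - nablab Y (nablab X Z) - nablab (br X Y) Z.

Definition Kcurv (X Y Z W : vec) : R :=
  ip S (Rbar X Y Z) W - 2^-1 * ip S (torsion X Y) (torsion Z W).

Definition sectional (u v : vec) : R :=
  Kcurv u v v u / (ip S u u * ip S v v - ip S u v ^+ 2).

Definition noncollinear (u v : vec) : Prop :=
  forall a b : R, a *: u + b *: v = 0 -> a = 0 /\ b = 0.

Definition inD (x : vec) : bool := (x <= D)%MS.

Definition perpD (w : vec) (x : vec) : bool := inD x && (ip S w x == 0).

Definition orthonormal_basis (W : pred vec) (k : nat) (e : 'I_k -> vec) : Prop :=
  [/\ forall i, W (e i),
      forall i j, ip S (e i) (e j) = (i == j)%:R &
      forall x, W x -> exists c : 'I_k -> R, x = \sum_(i < k) c i *: e i].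

(* Ricci curvature in direction w computed with the orthonormal basis e
   of w^perp \cap D *)
Definition ricci_with (w : vec) (k : nat) (e : 'I_k -> vec) : R :=
  \sum_(i < k) sectional w (e i).

End SubRiemannianLie.

(* Main.v *)
Require Import Defs.
From mathcomp Require Import all_boot all_order all_algebra.
From mathcomp Require Import reals.
From mathcomp Require Import ring lra.
Import Order.TTheory GRing.Theory Num.Theory.
Local Open Scope ring_scope.

Section Aux.
Variables (R : realType) (n : nat) (S : 'M[R]_n).

Lemma ipDl x y z : ip S (x + y) z = ip S x z + ip S y z.
Proof. by rewrite /ip !mulmxDl mxE. Qed.

Lemma ipZl a x z : ip S (a *: x) z = a * ip S x z.
Proof. by rewrite /ip -!scalemxAl mxE. Qed.

Lemma ipNl x z : ip S (- x) z = - ip S x z.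
Proof. by rewrite -scaleN1r ipZl mulN1r. Qed.

Lemma ip0l z : ip S 0 z = 0.
Proof. by rewrite -(scale0r (0 : 'rV[R]_n)) ipZl mul0r. Qed.

Lemma ip_sym x y : S^T = S -> ip S x y = ip S y x.
Proof.
move=> hS; rewrite /ip -[in LHS](trmxK (x *m S *m y^T)) [in LHS]mxE.
by rewrite !trmx_mul trmxK hS mulmxA.
Qed.
End Aux.

Theorem proposition3 (R : realType) (n m : nat)
  (br : 'rV[R]_n -> 'rV[R]_n -> 'rV[R]_n) (D Vs S : 'M[R]_n)
  (nabla : 'rV[R]_n -> 'rV[R]_n -> 'rV[R]_n) :
  (2 <= m)%N -> (m < n)%N ->
  lie_bracket br ->
  \rank D = m ->
  lie_generating br D ->
  \rank (D :&: Vs)%MS = 0%N -> (D + Vs == 1%:M)%MS ->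
  (forall x y, (br x y <= Vs)%MS) ->
  metric_matrix S ->
  (forall x y, (x <= D)%MS -> (y <= Vs)%MS -> ip S x y = 0) ->
  levi_civita br S nabla ->
  [/\ (* sectional curvatures *)
      forall u v, (u <= D)%MS -> (v <= D)%MS -> noncollinear u v ->
        sectional br S nabla D Vs u v = 0,
      (* Ricci curvatures *)
      forall w, (w <= D)%MS -> ip S w w = 1 ->
        forall k (e : 'I_k -> 'rV[R]_n),
          orthonormal_basis S (perpD S D w) e ->
          ricci_with br S nabla D Vs w e = 0 &
      (* scalar curvature *)
      forall k (f : 'I_k -> 'rV[R]_n), orthonormal_basis S (inD D) f ->
        forall (kk : 'I_k -> nat) (E : forall i : 'I_k, 'I_(kk i) -> 'rV[R]_n),
          (forall i, orthonormal_basis S (perpD S D (f i)) (E i)) ->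
          \sum_(i < k) ricci_with br S nabla D Vs (f i) (E i) = 0].
Proof.
move=> _ _ hbr _ _ hrk hsum hbrV [hST hpos] horth [htor hmet].
have dx : (D :&: Vs = 0)%MS by apply/eqP; rewrite -mxrank_eq0 hrk.
have dx' : (Vs :&: D = 0)%MS by rewrite capmxC.
have sub : forall x : 'rV[R]_n, (x <= D + Vs)%MS.
  by move: hsum => /andP[_ h] x; exact: submx_trans (submx1 x) h.
have HD x : (x <= D)%MS -> Hp D Vs x = x by move=> h; exact: proj_mx_id.
have VD x : (x <= D)%MS -> Vp D Vs x = 0 by move=> h; exact: proj_mx_0.
have Hsub x : (Hp D Vs x <= D)%MS by exact: proj_mx_sub.
have Vsub x : (Vp D Vs x <= Vs)%MS by exact: proj_mx_sub.
have split x : Hp D Vs x + Vp D Vs x = x by exact: add_proj_mx.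
have pos0 x : ip S x x = 0 -> x = 0.
  by move=> h; case: (eqVneq x 0) => // /hpos; rewrite h ltxx.
have sym x y : ip S x y = ip S y x by exact: ip_sym.
have orthVD x y : (y <= Vs)%MS -> (x <= D)%MS -> ip S y x = 0.
  by move=> hy hx; rewrite sym horth.
have nab0 X : nabla X 0 = 0.
  by apply: pos0; have := hmet X 0 (nabla X 0); rewrite ip0l addr0.
have kos X Y Z : 2 * ip S (nabla X Y) Z =
   ip S (br X Y) Z - ip S (br X Z) Y - ip S (br Y Z) X.
  have tor A B C : ip S (nabla A B) C = ip S (nabla B A) C + ip S (br A B) C.
    by rewrite -ipDl -htor addrC subrK.
  have met A B C : ip S (nabla A B) C = - ip S (nabla A C) B.
    by have := hmet A B C; rewrite (sym B) => /eqP; rewrite addr_eq0 => /eqP.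
  have e1 := tor X Y Z; have e2 := met Y X Z; have e3 := tor Y Z X.
  have e4 := met Z Y X; have e5 := tor Z X Y; have e6 := met X Z Y.
  have e7 : ip S (br Z X) Y = - ip S (br X Z) Y.
    by case: hbr => _ hanti _; rewrite hanti ipNl.
  lra.
have perpH x : (forall d, (d <= D)%MS -> ip S x d = 0) -> Hp D Vs x = 0.
  move=> h; apply: pos0; have := h _ (Hsub x).
  by rewrite -{1}(split x) ipDl (orthVD _ _ (Vsub x) (Hsub x)) addr0.
have N0 Y Z : (Y <= D)%MS -> (Z <= D)%MS -> Hp D Vs (nabla Y Z) = 0.
  move=> hY hZ; apply: perpH => d hd; have := kos Y Z d.
  rewrite (orthVD _ _ (hbrV _ _) hd) (orthVD _ _ (hbrV _ _) hZ).
  rewrite (orthVD _ _ (hbrV _ _) hY) !subr0 => /eqP.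
  by rewrite mulf_eq0 pnatr_eq0 => /eqP.
have nbDD Y Z : (Y <= D)%MS -> (Z <= D)%MS -> nablab nabla D Vs Y Z = 0.
  move=> hY hZ; rewrite /nablab (HD Z hZ) (VD Z hZ) nab0 /Vp mul0mx N0 // addr0.
  done.
have nb0 Y : nablab nabla D Vs Y 0 = 0.
  by rewrite /nablab /Hp /Vp !mul0mx nab0 !mul0mx addr0.
have K0 u v : (u <= D)%MS -> (v <= D)%MS -> Kcurv br S nabla D Vs u v v u = 0.
  move=> hu hv; rewrite /Kcurv /torsion /Rbar (nbDD v v hv hv) (nbDD u v hu hv) (nbDD v u hv hu) !nb0 !sub0r.
  rewrite oppr0 !sub0r /nablab (VD v hv) nab0 /Vp mul0mx addr0 ipNl.
rewrite (HD v hv).   have -> : ip S (Hp D Vs (nabla (br u v) v)) u = ip S (nabla (br u v) v) u.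
    by rewrite -{2}(split (nabla (br u v) v)) ipDl (orthVD _ _ (Vsub _) hu) addr0.
  have := kos (br u v) v u.
  rewrite (orthVD _ _ (hbrV _ _) hu) (orthVD _ _ (hbrV _ _) hv) !sub0r.
  rewrite ipNl (sym _ (- br v u)) ipNl opprK (sym (br v u)).
  lra.
have sec0 u v : (u <= D)%MS -> (v <= D)%MS -> sectional br S nabla D Vs u v = 0.
  by move=> hu hv; rewrite /sectional K0 // mul0r.
have ric0 w k (e : 'I_k -> 'rV[R]_n) : (w <= D)%MS ->
    orthonormal_basis S (perpD S D w) e -> ricci_with br S nabla D Vs w e = 0.
  move=> hw [he _ _]; rewrite /ricci_with big1 // => i _.
  by apply: sec0 => //; have /andP[] := he i.
split.
- by move=> u v hu hv _; exact: sec0.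
- by move=> w hw _ k e he; exact: ric0.
- move=> k f [hf _ _] kk E hE; rewrite big1 // => i _.
  exact: ric0 (hf i) (hE i).
Qed.
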